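(* Fix thresholds $minUtil\in\mathbb{R}$ and $minPro\in\mathbb{R}$. Let $P\subseteq I$ be an itemset and let $y,z\in I\setminus P$ be items with $y$ coming before $z$ in the processing order, each coming after every item of $P$. Set $Y=P\cup\{y\}$ and $Z=P\cup\{z\}$, so $Y\cup Z=P\cup\{y,z\}$. Suppose that either $$\text{(1)}\quad SUM(Y.pu)+SUM(Y.rpu)-\sum_{T_c\in D,\ Y\subseteq T_c,\ Z\not\subseteq T_c}\big(pu(Y,T_c)+rpu(Y,T_c)\big) < minUtil,$$ or $$\text{(2)}\quad SUM(Y.pro)-\sum_{T_c\in D,\ Y\subseteq T_c,\ Z\not\subseteq T_c} pro(Y,T_c) < minPro\cdot|D|.$$ Then neither $Y\cup Z$ nor any descendant of $Y\cup Z$ in the set-enumeration tree is a PHUI.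
   Context: Let $I$ be a finite set of items. An uncertain database $D=\{T_1,\dots,T_n\}$ is a finite collection of transactions with $|D|=n$ and each $T_c\subseteq I$. Each item $i\in T_c$ has a quantity $q(i,T_c)>0$ and a probability $p(i,T_c)\in(0,1]$. Each item $i\in I$ has an external utility $pr(i)\in\mathbb{R}$, which may be negative. Basic quantities: - $u(i,T_c)=pr(i)\,q(i,T_c)$. - For $X\subseteq T_c$: $u(X,T_c)=\sum_{i\in X}u(i,T_c)$ and $p(X,T_c)=\prod_{i\in X}p(i,T_c)$. - $u(X)=\sum_{T_c\in D,\ X\subseteq T_c}u(X,T_c)$ and $Pro(X)=\sum_{T_c\in D,\ X\subseteq T_c}p(X,T_c)$. An itemset $X$ is a potential high-utility itemset (PHUI) if $u(X)\ge minUtil$ and $Pro(X)\ge minPro\cdot|D|$. Fix a total processing order on $I$. The paper sorts items by ascending $RTWU$ and places all items with negative external utility after the positive ones. Here $RTWU(X)=\sum_{T_c\supseteq X}\sum_{i\in T_c,\ pr(i)>0}u(i,T_c)$. The set-enumeration tree has root $\emptyset$. The children of a node $X$ are the sets $X\cup\{i\}$ with $i$ after every item of $X$. Thus the descendants of $X$ are the itemsets $W\supsetneq X$ such that every item of $W\setminus X$ comes after every item of $X$. For $X\subseteq T_c$ define: - $pro(X,T_c)=p(X,T_c)$; - $pu(X,T_c)=\sum_{i\in X,\ pr(i)>0}u(i,T_c)$; - $nu(X,T_c)=\sum_{i\in X,\ pr(i)<0}u(i,T_c)$; - $rpu(X,T_c)=\sum u(i,T_c)$ over $i\in T_c$ with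 $pr(i)>0$ and $i$ after every item of $X$. For $\ast\in\{pro,pu,nu,rpu\}$ let $SUM(X.\ast)=\sum_{T_c\in D,\ X\subseteq T_c}\ast(X,T_c)$. *)

(* Defs.v *)
From HB Require Import structures.
From mathcomp Require Import all_boot all_order all_algebra.
Set Implicit Arguments. Unset Strict Implicit. Unset Printing Implicit Defensive.
Import Order.TTheory GRing.Theory Num.Theory.
Local Open Scope ring_scope.

(* An uncertain database over item type I with values in R:
   |D| = dbsize, transactions indexed by 'I_dbsize (a multiset of transactions),
   item set of T_c is items c, quantity q(i,T_c) = qty c i,
   probability p(i,T_c) = prob c i. *)
Record udb (R : realFieldType) (I : finType) := UDB {
  dbsize : nat;
  items : 'I_dbsize -> {set I};
  qty : 'I_dbsize -> I -> R;
  prob : 'I_dbsize -> I -> R }.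
Arguments dbsize {R I} _.
Arguments items {R I} _ _.
Arguments qty {R I} _ _ _.
Arguments prob {R I} _ _ _.

Section Defs.
Variables (R : realFieldType) (I : finType).
Variable (D : udb R I).
Variable (pr : I -> R).
Variable (rk : I -> nat).    (* processing order: i before j iff rk i < rk j *)

Definition valid_db : Prop :=
  forall (c : 'I_(dbsize D)) (i : I), i \in items D c ->
    0 < qty D c i /\ 0 < prob D c i <= 1.

Definition utl (i : I) (c : 'I_(dbsize D)) : R := pr i * qty D c i.
Definition utlX (X : {set I}) c : R := \sum_(i in X) utl i c.
Definition probX (X : {set I}) c : R := \prod_(i in X) prob D c i.

Definition utility (X : {set I}) : R :=
  \sum_(c : 'I_(dbsize D) | X \subset items D c) utlX X c.
Definition Pro (X : {set I}) : R :=
  \sum_(c : 'I_(dbsize D) | X \subset items D c) probX X c.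

Definition PHUI (minUtil minPro : R) (X : {set I}) : Prop :=
  minUtil <= utility X /\ minPro * (dbsize D)%:R <= Pro X.

Definition after (X : {set I}) (i : I) : bool := [forall j in X, (rk j < rk i)%N].

Definition descendant (X W : {set I}) : bool :=
  (X \proper W) && [forall i in W :\: X, after X i].

Definition pro (X : {set I}) c : R := probX X c.
Definition pu (X : {set I}) c : R := \sum_(i in X | 0 < pr i) utl i c.
Definition nu (X : {set I}) c : R := \sum_(i in X | pr i < 0) utl i c.
Definition rpu (X : {set I}) c : R :=
  \sum_(i in items D c | (0 < pr i) && after X i) utl i c.

Definition SUM (f : {set I} -> 'I_(dbsize D) -> R) (X : {set I}) : R :=
  \sum_(c : 'I_(dbsize D) | X \subset items D c) f X c.

End Defs.

Arguments valid_db {R I} D.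
Arguments utl {R I} D pr i c.
Arguments utlX {R I} D pr X c.
Arguments probX {R I} D X c.
Arguments utility {R I} D pr X.
Arguments Pro {R I} D X.
Arguments PHUI {R I} D pr minUtil minPro X.
Arguments after {I} rk X i.
Arguments descendant {I} rk X W.
Arguments pro {R I} D X c.
Arguments pu {R I} D pr X c.
Arguments nu {R I} D pr X c.
Arguments rpu {R I} D pr rk X c.
Arguments SUM {R I} D f X.

(* Main.v *)
Require Import Defs.
From mathcomp Require Import all_boot all_order all_algebra.
Import Order.TTheory GRing.Theory Num.Theory.
Local Open Scope ring_scope.

Lemma sum_le_gen (R : realFieldType) (n : nat) (P Q : 'I_n -> bool)
  (g h : 'I_n -> R) :
  (forall c, P c -> Q c) -> (forall c, P c -> g c <= h c) ->
  (forall c, Q c -> 0 <= h c) ->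
  \sum_(c | P c) g c <= \sum_(c | Q c) h c.
Proof.
move=> PQ gh h0; rewrite big_mkcond [X in _ <= X]big_mkcond /=.
apply: ler_sum => c _; case: (boolP (P c)) => Pc.
  by rewrite (PQ _ Pc) gh.
by case: ifP => // Qc; exact: h0.
Qed.

Lemma diff_sum (R : realFieldType) (n : nat) (A B : 'I_n -> bool) (F : 'I_n -> R) :
  \sum_(c | A c) F c - \sum_(c | A c && ~~ B c) F c = \sum_(c | A c && B c) F c.
Proof. by rewrite (bigID B) /= addrK. Qed.

Theorem lemma1 (R : realFieldType) (I : finType) (D : udb R I)
  (pr : I -> R) (rk : I -> nat) (minUtil minPro : R)
  (P : {set I}) (y z : I) :
  valid_db D ->
  injective rk ->
  y \notin P -> z \notin P ->
  (rk y < rk z)%N ->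
  after rk P y -> after rk P z ->
  let Y := y |: P in
  let Z := z |: P in
  (SUM D (pu D pr) Y + SUM D (rpu D pr rk) Y
     - \sum_(c : 'I_(dbsize D) | (Y \subset items D c) && ~~ (Z \subset items D c))
         (pu D pr Y c + rpu D pr rk Y c) < minUtil
   \/
   SUM D (pro D) Y
     - \sum_(c : 'I_(dbsize D) | (Y \subset items D c) && ~~ (Z \subset items D c))
         pro D Y c < minPro * (dbsize D)%:R) ->
  forall W : {set I}, W = Y :|: Z \/ descendant rk (Y :|: Z) W ->
    ~ PHUI D pr minUtil minPro W.
Proof.
move=> vd _ yP zP ryz aPy aPz Y Z Hcond W HW [HU HP].
have [sYZW HWa] : Y :|: Z \subset W /\
    (forall i, i \in W -> i \notin Y :|: Z -> after rk (Y :|: Z) i).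
  case: HW => [->|/andP [/proper_sub sub /forallP Hf]].
    by split=> // i ->.
  split=> // i iW iYZ; have := Hf i; rewrite in_setD iW iYZ /=; exact.
have sYW : Y \subset W by apply: subset_trans sYZW; exact: subsetUl.
have sZW : Z \subset W by apply: subset_trans sYZW; exact: subsetUr.
have zY : z \notin Y.
  rewrite /Y in_setU1 negb_or zP andbT; apply/eqP => ezy.
  by move: ryz; rewrite ezy ltnn.
have aYz : after rk Y z.
  apply/forallP => j; apply/implyP; rewrite /Y in_setU1 => /orP [/eqP -> //|jP].
  by move/forallP: aPz => /(_ j); rewrite jP.
have subc : forall c, W \subset items D c ->
    (Y \subset items D c) && (Z \subset items D c).
  move=> c sW; rewrite (subset_trans sYW sW) (subset_trans sZW sW) //.
have utl_ge0 : forall c i, i \in items D c -> 0 < pr i -> 0 <= utl D pr i c.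
  move=> c i ic pi; rewrite /utl; apply: mulr_ge0; first exact: ltW.
  by have [q _] := vd c i ic; exact: ltW.
have utl_le0 : forall c i, i \in items D c -> ~~ (0 < pr i) -> utl D pr i c <= 0.
  move=> c i ic pi; rewrite /utl; apply: mulr_le0_ge0; first by rewrite leNgt.
  by have [q _] := vd c i ic; exact: ltW.
have nonneg_u : forall c, (Y \subset items D c) && (Z \subset items D c) ->
    0 <= pu D pr Y c + rpu D pr rk Y c.
  move=> c /andP [sY _]; apply: addr_ge0; apply: sumr_ge0 => i.
    by case/andP => iY pi; apply: utl_ge0 => //; apply: (subsetP sY).
  by case/andP => ic /andP [pi _]; exact: utl_ge0.
case: Hcond => [Hu|Hp].
- move: Hu; rewrite /SUM -big_split /= diff_sum => Hu.
  suff : utility D pr W <= \sum_(c | (Y \subset items D c) && (Z \subset items D c))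
      (pu D pr Y c + rpu D pr rk Y c).
    by move=> Hle; have := le_lt_trans (le_trans HU Hle) Hu; rewrite ltxx.
  apply: sum_le_gen => // c sW.
  rewrite /utlX /pu /rpu big_mkcond [X in _ <= X + _]big_mkcond
    [X in _ <= _ + X]big_mkcond -big_split /=.
  apply: ler_sum => i _.
  case: (boolP (i \in W)) => iW.
    have ic : i \in items D c := subsetP sW i iW.
    case: (boolP (0 < pr i)) => pi /=.
      case: (boolP (i \in Y)) => iY /=.
        by rewrite lerDl; case: ifP => // _; exact: utl_ge0.
      rewrite ic add0r /=.
      suff -> : after rk Y i by [].
      case: (boolP (i \in Y :|: Z)) => iYZ.
        move: iYZ; rewrite in_setU (negbTE iY) /= /Z in_setU1 => /orP [/eqP -> //|iP].
        by move: iY; rewrite /Y in_setU1 iP orbT.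
      have := HWa i iW iYZ; move/forallP => Hf; apply/forallP => j; apply/implyP => jY.
      by have := Hf j; rewrite in_setU jY.
    rewrite !andbF /= addr0.
    exact: utl_le0.
  have iY : i \notin Y by apply: contra iW; apply: (subsetP sYW).
  rewrite (negbTE iY) /= add0r; case: ifP => // /andP [ic /andP [pi _]].
  exact: utl_ge0.
- move: Hp; rewrite /SUM diff_sum => Hp.
  suff : Pro D W <= \sum_(c | (Y \subset items D c) && (Z \subset items D c)) pro D Y c.
    by move=> Hle; have := le_lt_trans (le_trans HP Hle) Hp; rewrite ltxx.
  apply: sum_le_gen => // [c sW|c /andP [sY _]].
    rewrite /probX /pro /probX big_mkcond [X in _ <= X]big_mkcond /=.
    apply: ler_prod => i _.
    case: (boolP (i \in W)) => iW.
      have [_ /andP [p0 p1]] := vd c i (subsetP sW i iW).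
      have := vd c i (subsetP sW i iW) => -[_ /andP [pp0 pp1]].
      case: ifP => _; rewrite ?pp1 ?lexx ?ltW //.
    have iY : i \notin Y by apply: contra iW; apply: (subsetP sYW).
    by rewrite (negbTE iY) ler01 lexx.
  rewrite /pro /probX; apply: prodr_ge0 => i iY.
  by have [_ /andP [p0 _]] := vd c i (subsetP sY i iY); exact: ltW.
Qed.
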